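(* Let $\mathcal{C}$ be a nonempty $3$-divisible set of points of $\mathrm{PG}(v-1,3)$ with $v\ge2$, and let $n=|\mathcal{C}|$. Then $n=4$ or $n\ge8$. Moreover, for $n=4$ and for every $n\ge8$ there exists a nonempty $3$-divisible set of $n$ points in $\mathrm{PG}(v-1,3)$ for some $v\ge2$.
   Context: $\mathrm{PG}(v-1,3)$ is the set of $1$-dimensional subspaces (points) of $\mathbb{F}_3^v$; hyperplanes are the $(v-1)$-dimensional subspaces. A set $\mathcal{C}$ of points is $\Delta$-divisible if there is an integer $u$ with $|\mathcal{C}\cap H|\equiv u\pmod{\Delta}$ for every hyperplane $H$, where $\mathcal{C}\cap H$ is the set of points of $\mathcal{C}$ contained in $H$. *)

(* Defs.v *)
From mathcomp Require Import all_boot all_algebra.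
Set Implicit Arguments. Unset Strict Implicit. Unset Printing Implicit Defensive.
Local Open Scope ring_scope.

(* Vectors of F_3^v are row vectors 'rV['F_3]_v.  A subspace is represented by
   its (finite) set of vectors; it is the row space of some matrix. *)
Definition vec3 (v : nat) := 'rV['F_3]_v.

Definition subspace_of_dim (v k : nat) (S : {set vec3 v}) : Prop :=
  exists A : 'M['F_3]_v, \rank A = k /\ S = [set x : vec3 v | (x <= A)%MS].

Definition is_point (v : nat) (P : {set vec3 v}) : Prop := subspace_of_dim 1 P.

Definition is_hyperplane (v : nat) (H : {set vec3 v}) : Prop :=
  subspace_of_dim v.-1 H.

Definition point_set (v : nat) (C : {set {set vec3 v}}) : Prop :=
  forall P, P \in C -> is_point P.

Definition meet_hyp (v : nat) (C : {set {set vec3 v}}) (H : {set vec3 v}) :=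
  [set P in C | P \subset H].

Definition divisible (v Delta : nat) (C : {set {set vec3 v}}) : Prop :=
  exists u : nat, forall H, is_hyperplane H -> #|meet_hyp C H| = u %[mod Delta].

(* Main.v *)
Require Import Defs.
From mathcomp Require Import all_boot all_algebra.
From mathcomp Require Import zify.
Set Implicit Arguments. Unset Strict Implicit. Unset Printing Implicit Defensive.
Import GRing.Theory.
Local Open Scope ring_scope.

Lemma card_F3 : #|'F_3| = 3%N. Proof. by rewrite card_Fp. Qed.

Lemma card_cV (v : nat) : #|{: 'cV['F_3]_v}| = (3 ^ v)%N.
Proof. by rewrite card_mx card_F3 muln1. Qed.

Lemma fiber_card m v (A : 'M['F_3]_(m,v)) (p : pred 'cV['F_3]_m) :
  row_free A ->
  (#|[set a : 'cV['F_3]_v | p (A *m a)]| * 3 ^ m = #|[set t | p t]| * 3 ^ v)%N.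
Proof.
move/row_freeP=> [B AB].
set K := [set a : 'cV['F_3]_v | A *m a == 0].
have fib : forall t : 'cV['F_3]_m, #|[set a | A *m a == t]| = #|K|.
  move=> t; have -> : [set a | A *m a == t] = [set k + B *m t | k in K].
    apply/setP=> a; rewrite inE; apply/eqP/imsetP.
    - move=> Aa; exists (a - B *m t); last by rewrite subrK.
      by rewrite inE mulmxBr Aa mulmxA AB mul1mx subrr.
    - by move=> [k]; rewrite inE => /eqP Ak ->; rewrite mulmxDr Ak add0r mulmxA AB mul1mx.
  by apply: card_imset; exact: addIr.
have gen : forall q : pred 'cV['F_3]_m,
    #|[set a | q (A *m a)]| = (#|[set t | q t]| * #|K|)%N.
  move=> q; rewrite -sum1_card (partition_big (fun a => A *m a) q) //=; last first.
    by move=> a; rewrite inE.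
  rewrite -sum_nat_const; apply: eq_big => [t|t qt]; first by rewrite inE.
  rewrite -(fib t) -sum1_card; apply: eq_bigl => a.
  by rewrite !inE; case: (A *m a =P t) => [->|]; rewrite ?qt ?andbF.
have tot : (3 ^ v = 3 ^ m * #|K|)%N.
  have e1 : #|[set a : 'cV['F_3]_v | predT (A *m a)]| = (3 ^ v)%N.
    by rewrite -card_cV; apply: eq_card => a; rewrite inE.
  have e2 : #|[set t : 'cV['F_3]_m | predT t]| = (3 ^ m)%N.
    by rewrite -card_cV; apply: eq_card => a; rewrite inE.
  by rewrite -e1 -e2 gen.
rewrite gen tot. lia.
Qed.

Lemma card_nz1 : #|[set t : 'cV['F_3]_1 | t != 0]| = 2%N.
Proof.
have -> : [set t : 'cV['F_3]_1 | t != 0] = [set~ 0] by apply/setP=> t; rewrite !inE.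
by rewrite cardsC1 card_cV.
Qed.

Lemma card_nz2 :
  #|[set t : 'cV['F_3]_2 | (usubmx (t : 'M_(1 + 1, 1)) != 0) && (dsubmx (t : 'M_(1 + 1, 1)) != 0)]| = 4%N.
Proof.
set S1 := [set t : 'cV['F_3]_1 | t != 0].
have -> : [set t : 'cV['F_3]_2 | (usubmx (t : 'M_(1 + 1, 1)) != 0) && (dsubmx (t : 'M_(1 + 1, 1)) != 0)]
   = [set (col_mx (ud.1 : 'cV['F_3]_1) (ud.2 : 'cV['F_3]_1) : 'cV['F_3]_2) | ud in setX S1 S1].
  apply/setP=> t; rewrite inE; apply/idP/imsetP.
  - move=> h; exists (usubmx (t : 'M_(1 + 1, 1)), dsubmx (t : 'M_(1 + 1, 1))); last by rewrite vsubmxK.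
    by rewrite !inE.
  - by move=> [[u d]]; rewrite !inE /= => /andP[u0 d0] ->; rewrite col_mxKu col_mxKd u0 d0.
rewrite card_imset ?cardsX ?card_nz1 //.
move=> [u d] [u' d'] /= h.
have hu := congr1 (@usubmx _ 1 1 1) h; have hd := congr1 (@dsubmx _ 1 1 1) h.
by rewrite !col_mxKu in hu; rewrite !col_mxKd in hd; rewrite hu hd.
Qed.

Definition span v (x : 'rV['F_3]_v) : {set vec3 v} := [set z : vec3 v | (z <= x)%MS].
Definition rep v (P : {set vec3 v}) : vec3 v := odflt 0 [pick x in P | x != 0].
Definition hyp v (a : 'cV['F_3]_v) : {set vec3 v} := [set z : vec3 v | z *m a == 0].

Lemma nz_row m n (A : 'M['F_3]_(m, n)) : A != 0 -> exists i, row i A != 0.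
Proof.
move=> A0; apply/existsP; apply: contraR A0; rewrite negb_exists => /forallP h.
by apply/eqP/row_matrixP => i; rewrite row0; apply/eqP; move: (h i); rewrite negbK.
Qed.

Lemma nz_col m n (A : 'M['F_3]_(m, n)) : A != 0 -> exists j, col j A != 0.
Proof.
move=> A0; have [j hj] : exists j, row j A^T != 0.
  by apply: nz_row; apply: contra A0 => /eqP h; rewrite -[A]trmxK h linear0.
by exists j; apply: contra hj => /eqP; rewrite -tr_col => ->; rewrite linear0.
Qed.

Lemma point_rep v (P : {set vec3 v}) : is_point P -> rep P != 0 /\ P = span (rep P).
Proof.
case=> A [rA ->].
have A0 : A != 0 by rewrite -mxrank_eq0 rA.
have [i hi] := nz_row A0.
rewrite /rep; case: pickP => [x /andP[] | none]; last first.
  by move: (none (row i A)); rewrite inE row_sub hi.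
rewrite inE => xA x0 /=; split => //.
have ex : (x == A)%MS.
  by rewrite -(mxrank_leqif_eq xA).2 rA rank_rV x0.
by apply/setP => z; rewrite !inE (eqmxP ex).
Qed.

Lemma span_sub_hyp v (x : 'rV['F_3]_v) (a : 'cV['F_3]_v) :
  (span x \subset hyp a) = (x *m a == 0).
Proof.
apply/subsetP/idP => [h | xa z].
  by have := h x; rewrite !inE submx_refl; apply.
rewrite !inE => zx; have := submxMr a zx; by rewrite (eqP xa) submx0.
Qed.

Lemma rank_col v (a : 'cV['F_3]_v) : \rank a = (a != 0).
Proof. by rewrite -mxrank_tr rank_rV trmx_eq0. Qed.

Lemma hyp_is v (a : 'cV['F_3]_v) : a != 0 -> is_hyperplane (hyp a).
Proof.
move=> a0; exists (kermx a); split.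
  by rewrite mxrank_ker rank_col a0 subn1.
by apply/setP=> z; rewrite !inE sub_kermx.
Qed.

Lemma is_hyp v (H : {set vec3 v}) : (0 < v)%N -> is_hyperplane H ->
  exists2 a : 'cV['F_3]_v, a != 0 & H = hyp a.
Proof.
move=> v0 [A [rA ->]].
have rK : \rank (cokermx A) = 1%N by rewrite mxrank_coker rA; lia.
have K0 : cokermx A != 0 by rewrite -mxrank_eq0 rK.
have [j hj] := nz_col K0.
exists (col j (cokermx A)) => //.
have Aa : A *m col j (cokermx A) = 0.
  by rewrite colE mulmxA -colE; have := submx_refl A; rewrite submxE => /eqP ->; rewrite col0.
have Ak : (A <= kermx (col j (cokermx A)))%MS by rewrite sub_kermx Aa.
have ex : (A == kermx (col j (cokermx A)))%MS.
  by rewrite -(mxrank_leqif_eq Ak).2 mxrank_ker rank_col hj rA subn1.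
by apply/setP => z; rewrite !inE (eqmxP ex) sub_kermx.
Qed.

Lemma rowfree1 v (x : 'rV['F_3]_v) : x != 0 -> row_free x.
Proof. by move=> x0; rewrite /row_free rank_rV x0. Qed.

Lemma rowfree2 v (x y : 'rV['F_3]_v) : x != 0 -> y != 0 -> span x != span y ->
  row_free (col_mx x y).
Proof.
move=> x0 y0 sxy; rewrite /row_free.
have xc : (x <= col_mx x y)%MS by rewrite -addsmxE addsmxSl.
have yc : (y <= col_mx x y)%MS by rewrite -addsmxE addsmxSr.
have r1 := mxrankS xc; rewrite rank_rV x0 in r1.
have r2 := rank_leq_row (col_mx x y).
apply/eqP; case: (boolP (\rank (col_mx x y) == 1%N)) => [/eqP e|]; last by lia.
have ex : (x == col_mx x y)%MS by rewrite -(mxrank_leqif_eq xc).2 e rank_rV x0.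
have ey : (y == col_mx x y)%MS by rewrite -(mxrank_leqif_eq yc).2 e rank_rV y0.
case/negP: sxy; apply/eqP/setP => z; rewrite !inE.
by rewrite (eqmxP ex) (eqmxP ey).
Qed.

Lemma card_sep (T : finType) (A : {set T}) (q : pred T) :
  #|[set x in A | q x]| = (\sum_(x in A) (q x : nat))%N.
Proof.
rewrite -sum1_card big_mkcond /= [RHS]big_mkcond /=; apply: eq_bigr => x _.
by rewrite !inE; case: (x \in A); case: (q x).
Qed.

Lemma card_sumT (T : finType) (q : pred T) :
  #|[set x | q x]| = (\sum_x (q x : nat))%N.
Proof.
rewrite -sum1_card big_mkcond /=; apply: eq_bigr => x _.
by rewrite !inE; case: (q x).
Qed.

Section Counting.
Variable v : nat.
Variable C : {set {set vec3 v}}.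
Hypothesis pC : point_set C.

Definition w (a : 'cV['F_3]_v) := #|[set P in C | rep P *m a != 0]|.

Lemma rep_nz P : P \in C -> rep P != 0.
Proof. by move=> /pC /point_rep []. Qed.

Lemma count1 P : P \in C ->
  (#|[set a : 'cV['F_3]_v | (rep P *m a != 0)%R]| * 3 = 2 * 3 ^ v)%N.
Proof.
move=> PC; have := fiber_card (fun t : 'cV['F_3]_1 => t != 0) (rowfree1 (rep_nz PC)).
by rewrite card_nz1 expn1.
Qed.

Lemma count2 P Q : P \in C -> Q \in C -> P != Q ->
  (#|[set a : 'cV['F_3]_v | (rep P *m a != 0)%R && (rep Q *m a != 0)%R]| * 9 = 4 * 3 ^ v)%N.
Proof.
move=> PC QC PQ.
have sPQ : span (rep P) != span (rep Q).
  by apply: contra PQ; case: (point_rep (pC PC)) => _ {2}->; case: (point_rep (pC QC)) => _ {2}->.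
have := fiber_card (fun t : 'cV['F_3]_2 => (usubmx (t : 'M_(1 + 1, 1)) != 0) && (dsubmx (t : 'M_(1 + 1, 1)) != 0))
   (rowfree2 (rep_nz PC) (rep_nz QC) sPQ).
rewrite card_nz2 => <-; congr (_ * _)%N; apply: eq_card => a; rewrite !inE.
by rewrite (mul_col_mx (rep P) (rep Q) a) col_mxKu col_mxKd.
Qed.

Lemma S1_eq : ((\sum_a w a) * 3 = 2 * #|C| * 3 ^ v)%N.
Proof.
rewrite /w; under eq_bigr => a _ do rewrite card_sep.
rewrite exchange_big /= big_distrl /=.
under eq_bigr => P PC do rewrite -card_sumT count1 //.
by rewrite sum_nat_const mulnCA mulnA.
Qed.
Lemma S2_eq : ((\sum_a w a ^ 2) * 9 = (6 * #|C| + (#|C| - 1) * 4 * #|C|) * 3 ^ v)%N.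
Proof.
have E : forall a, (w a ^ 2 = \sum_(P in C) \sum_(Q in C)
     ((rep P *m a != 0)%R && (rep Q *m a != 0)%R : nat))%N.
  move=> a; rewrite /w card_sep -mulnn big_distrlr /=.
  by apply: eq_bigr => P _; apply: eq_bigr => Q _; rewrite mulnb.
rewrite (eq_bigr _ (fun a _ => E a)) exchange_big /=.
have F (P : {set vec3 v}) (PC : P \in C) : ((\sum_(a : 'cV['F_3]_v) \sum_(Q in C)
     ((rep P *m a != 0)%R && (rep Q *m a != 0)%R : nat)) * 9 = 
     6 * 3 ^ v + (#|C| - 1) * 4 * 3 ^ v)%N.
  rewrite exchange_big /= big_distrl (bigD1 P PC) /=.
  rewrite -card_sumT.
  have -> : [set a : 'cV['F_3]_v | (rep P *m a != 0)%R && (rep P *m a != 0)%R] =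
      [set a | rep P *m a != 0] by apply/setP => a; rewrite !inE andbb.
  have h1 := count1 PC.
  have -> : (#|[set a : 'cV['F_3]_v | (rep P *m a != 0)%R]| * 9 = 6 * 3 ^ v)%N.
    by rewrite (_ : 9 = 3 * 3)%N // mulnA h1 mulnAC.
  congr (_ + _)%N.
  rewrite (eq_bigr (fun _ => 4 * 3 ^ v)%N); last first.
    move=> Q /andP[QC QP]; rewrite -card_sumT; apply: count2 => //; by rewrite eq_sym.
  rewrite sum_nat_cond_const (cardsD1 P C) PC /=.
  have -> : [set x | (x \in C) && (x != P)] = C :\ P.
    by apply/setP => x; rewrite !inE andbC.
  by rewrite add1n subSS subn0 mulnA.
rewrite big_distrl /= (eq_bigr _ F) sum_nat_const.
have ar : forall n N m : nat, (n * (6 * N + m * 4 * N) = (6 * n + m * 4 * n) * N)%N by move=> *; nia.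
exact: ar.
Qed.
End Counting.

Lemma meet_rep v (C : {set {set vec3 v}}) (a : 'cV['F_3]_v) : point_set C ->
  meet_hyp C (hyp a) = [set P in C | rep P *m a == 0].
Proof.
move=> pC; apply/setP => P; rewrite !inE; case PC: (P \in C) => //=.
by case: (point_rep (pC P PC)) => _ {1}->; rewrite span_sub_hyp.
Qed.

Lemma part1 v (C : {set {set vec3 v}}) : (2 <= v)%N -> point_set C -> C != set0 ->
  divisible 3 C -> #|C| = 4%N \/ (8 <= #|C|)%N.
Proof.
move=> v2 pC C0 [u hu].
have n0 : (0 < #|C|)%N by rewrite lt0n cards_eq0.
have hm : forall a : 'cV['F_3]_v, a != 0 ->
    (#|meet_hyp C (hyp a)| + w C a = #|C|)%N.
  move=> a a0; rewrite meet_rep // /w !card_sep -big_split /= -sum1_card.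
  by apply: eq_bigr => P _; case: (rep P *m a == 0).
have hmod : forall a : 'cV['F_3]_v, a != 0 -> #|meet_hyp C (hyp a)| = u %[mod 3].
  by move=> a a0; apply: hu; apply: hyp_is.
have w0 : w C 0 = 0%N.
  rewrite /w; apply/eqP; rewrite cards_eq0; apply/eqP/setP => Q.
  by rewrite !inE mulmx0 eqxx andbF.
have wle : forall a, (w C a <= #|C|)%N.
  by move=> a; apply: subset_leq_card; apply/subsetP => P; rewrite inE => /andP[].
have S1 := S1_eq pC; have S2 := S2_eq pC.
set N := (3 ^ v)%N in S1 S2.
have N9 : exists K, N = (9 * K)%N /\ (0 < K)%N.
  exists (3 ^ (v - 2))%N; rewrite /N -{1}(subnKC v2) expnD expn_gt0; done.
have [i0 _] : exists i0 : 'I_v, true by exists (Ordinal (leq_trans (isT : 0 < 2)%N v2)).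
set a1 : 'cV['F_3]_v := delta_mx i0 0.
have a10 : a1 != 0.
  apply/eqP => h; have := congr1 (fun M : 'cV['F_3]_v => M i0 0) h.
  by rewrite !mxE !eqxx /= => /eqP; rewrite oner_eq0.
have wc : forall a : 'cV['F_3]_v, a != 0 -> w C a = w C a1 %[mod 3].
  move=> a a0; have := hm a a0; have := hm a1 a10; have := hmod a a0; have := hmod a1 a10.
  move: (w C a) (w C a1) #|meet_hyp C (hyp a)| #|meet_hyp C (hyp a1)| => x y p q.
  move=> h1 h2 h3 h4; lia.
have w3 : forall a, (3 %| w C a)%N.
  have c0 : (w C a1 %% 3 = 0)%N.
    have e1 : (\sum_a w C a = \sum_(a : 'cV['F_3]_v | (a != 0)%R) w C a)%N by rewrite (bigD1 0) //= w0.
    have e2 : (\sum_(a : 'cV['F_3]_v | (a != 0)%R) (w C a %% 3) = \sum_(a : 'cV['F_3]_v | (a != 0)%R) (w C a1 %% 3))%N.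
      by apply: eq_bigr => a a0; rewrite (wc a a0).
    rewrite sum_nat_cond_const in e2.
    have e3 : #|[set a : 'cV['F_3]_v | a != 0]| = N.-1.
      by rewrite /N -card_cV -(cardsC1 (0 : 'cV['F_3]_v)); apply: eq_card => a; rewrite !inE.
    have := modn_summ (index_enum _) (fun a : 'cV['F_3]_v => a != 0) (w C) 3.
    rewrite e2 e3 -e1.
    have hc : (w C a1 %% 3 < 3)%N by apply: ltn_pmod.
    case: N9 => K [NK K0].
    move: (w C a1 %% 3)%N hc S1 => c hc; rewrite NK.
    move: (\sum_a w C a)%N #|C| => S n.
    by case: c hc => [|[|[|]]] //= _ h1 h2; lia.
  move=> a; case: (boolP (a == 0)) => [/eqP -> | a0]; first by rewrite w0.
  by rewrite /dvdn (wc a a0) c0.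
have ineq : (9 * \sum_a w C a <= \sum_a w C a ^ 2 + 18 * N)%N.
  have eN : (\sum_(a : 'cV['F_3]_v) 18 = 18 * N)%N.
    by rewrite sum_nat_const card_cV mulnC.
  rewrite -eN big_distrr -big_split /=; apply: leq_sum => a _.
  have := w3 a; case/dvdnP => k ->.
  case: (leqP k 2) => hk; last by nia.
  by case: k hk => [|[|[|]]].
have NK := N9; case: NK => K [NK K0].
case: (leqP 8 #|C|) => [|hn]; first by right.
left.
have [h5 | h67] : (#|C| <= 5)%N \/ (#|C| = 6 \/ #|C| = 7)%N by lia.
  have wsq : forall a, (w C a ^ 2 = 3 * w C a)%N.
    move=> a; have := w3 a; have := wle a; case/dvdnP: (w3 a) => k ->.
    by case: k => [|[|[|k]]] //= h _; have := leq_trans h h5.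
  rewrite (eq_bigr _ (fun a _ => wsq a)) -big_distrr /= in S2.
  rewrite NK in S1 S2.
  move: (\sum_a w C a)%N S1 S2 => S.
  by move: #|C| n0 h5 => n; case: n => [|[|[|[|[|[|]]]]]] //= *; lia.
rewrite NK in S1 S2 ineq.
move: (\sum_a w C a)%N (\sum_a w C a ^ 2)%N S1 S2 ineq => S T.
by case: h67 => ->; lia.
Qed.

Lemma F3_sq (c : 'F_3) : ((c != 0) : nat)%:R = c * c.
Proof. by case: c => [[|[|[|m]]] Hm] //; apply/val_inj. Qed.

Lemma F3_nat (c : 'F_3) : c = (c : nat)%:R.
Proof. by case: c => [[|[|[|m]]] Hm] //; apply/val_inj. Qed.

Lemma F3_natE (n : nat) : ((n%:R : 'F_3) : nat) = (n %% 3)%N.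
Proof. by rewrite val_Fp_nat. Qed.

Definition gram v (s : seq 'rV['F_3]_v) : 'M['F_3]_v := \sum_(x <- s) x^T *m x.

Definition good v (s : seq 'rV['F_3]_v) :=
  [&& all (fun x => x != 0) s, pairwise (fun x y => ~~ (x <= y)%MS) s & gram s == 0].

Lemma cnt_gram v (s : seq 'rV['F_3]_v) (a : 'cV['F_3]_v) :
  ((count (fun x => x *m a != 0) s)%:R : 'F_3) = (a^T *m gram s *m a) 0 0.
Proof.
elim: s => [|x s IH] /=; first by rewrite /gram big_nil mulmx0 mul0mx mxE.
rewrite natrD IH /gram big_cons mulmxDr mulmxDl [in RHS]mxE; congr (_ + _).
rewrite !mulmxA -trmx_mul -mulmxA.
set y := x *m a.
have -> : (y != 0) = (y 0 0 != 0).
  apply/idP/idP; apply: contraNN => /eqP h; apply/eqP.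
    by apply/matrixP => i j; rewrite !ord1 h mxE.
  by rewrite h mxE.
have e : forall M : 'M['F_3]_1, (M^T *m M) 0 0 = M 0 0 * M 0 0 by move=> M; rewrite mxE big_ord1 mxE.
by rewrite F3_sq e.
Qed.

Lemma uniq_span v (s : seq 'rV['F_3]_v) :
  pairwise (fun x y => ~~ (x <= y)%MS) s -> uniq (map (@span v) s).
Proof.
elim: s => [|x s IH] //= /andP[hx hs]; rewrite IH // andbT.
apply/mapP => [[y ys e]].
move/negP: (allP hx y ys); apply.
have : x \in span x by rewrite inE submx_refl.
by rewrite e inE.
Qed.

Lemma card_filter_set (T : finType) (t : seq T) (q : pred T) : uniq t ->
  #|[set x in t | q x]| = count q t.
Proof.
move=> ut; rewrite -size_filter -(card_uniqP (filter_uniq q ut)).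
by apply: eq_card => x; rewrite !inE mem_filter andbC.
Qed.

Lemma good_set v (s : seq 'rV['F_3]_v) : (2 <= v)%N -> good s -> s != [::] ->
  exists C : {set {set vec3 v}},
    [/\ (2 <= v)%N, point_set C, C != set0, divisible 3 C & #|C| = size s].
Proof.
move=> v2 /and3P[nz pw /eqP g0] sn.
have us := uniq_span pw.
exists [set P in map (@span v) s]; split => //.
- move=> P; rewrite inE => /mapP [x xs ->].
  exists <<x>>%MS; split.
    by rewrite genmxE rank_rV (allP nz x xs).
  by apply/setP => z; rewrite !inE genmxE.
- rewrite -card_gt0 cardsE (card_uniqP us) size_map.
  by case: s sn {nz pw g0 us}.
- exists (size s) => H hH.
  have [a a0 ->] := is_hyp (leq_trans (isT : (0 < 2)%N) v2) hH.
  have -> : meet_hyp [set P in map (@span v) s] (hyp a) =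
      [set P in map (@span v) s | P \subset hyp a] by apply/setP => P; rewrite !inE.
  rewrite card_filter_set // count_map.
  have e : count (preim (@span v) (fun P => P \subset hyp a)) s = count (fun x => x *m a == 0) s.
    by apply: eq_count => x; rewrite /= span_sub_hyp.
  rewrite e.
  have h3 : (count (fun x => (x *m a != 0)%R) s %% 3 = 0)%N.
    by rewrite -F3_natE cnt_gram g0 mulmx0 mul0mx mxE.
  have := count_predC (fun x => x *m a == 0) s.
  have -> : count (predC (fun x => x *m a == 0)) s = count (fun x => x *m a != 0) s by [].
  move: h3; move: (count (fun x => x *m a == 0) s) (count (fun x => x *m a != 0) s) => p q.
  by move=> h1 <-; rewrite -modnDm h1 addn0 modn_mod.
- by rewrite cardsE (card_uniqP us) size_map.
Qed.

Lemma row_mx_sub_l v1 v2 (x y : 'rV['F_3]_v1) :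
  ((row_mx x (0 : 'rV_v2) <= row_mx y (0 : 'rV_v2))%MS) -> (x <= y)%MS.
Proof.
case/sub_rVP => c; rewrite scale_row_mx => /eq_row_mx [-> _].
by apply/sub_rVP; exists c.
Qed.

Lemma row_mx_sub_r v1 v2 (x y : 'rV['F_3]_v2) :
  ((row_mx (0 : 'rV_v1) x <= row_mx (0 : 'rV_v1) y)%MS) -> (x <= y)%MS.
Proof.
case/sub_rVP => c; rewrite scale_row_mx => /eq_row_mx [_ ->].
by apply/sub_rVP; exists c.
Qed.

Lemma gram_cons v (x : 'rV['F_3]_v) s : gram (x :: s) = x^T *m x + gram s.
Proof. by rewrite /gram big_cons. Qed.

Lemma gram_cat v (s t : seq 'rV['F_3]_v) : gram (s ++ t) = gram s + gram t.
Proof. by rewrite /gram big_cat. Qed.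

Lemma gram_l v1 v2 (s : seq 'rV['F_3]_v1) :
  gram (map (fun x => row_mx x (0 : 'rV_v2)) s) = block_mx (gram s) 0 0 0.
Proof.
elim: s => [|x s IH]; first by rewrite /gram !big_nil block_mx0.
rewrite /= !gram_cons IH.
by rewrite tr_row_mx mul_col_row !linear0 ?mul0mx ?mulmx0 add_block_mx ?addr0 ?add0r.
Qed.

Lemma gram_r v1 v2 (s : seq 'rV['F_3]_v2) :
  gram (map (fun x => row_mx (0 : 'rV_v1) x) s) = block_mx 0 0 0 (gram s).
Proof.
elim: s => [|x s IH]; first by rewrite /gram !big_nil block_mx0.
rewrite /= !gram_cons IH.
by rewrite tr_row_mx mul_col_row !linear0 ?mul0mx ?mulmx0 add_block_mx ?addr0 ?add0r.
Qed.

Lemma good_sum v1 v2 (s1 : seq 'rV['F_3]_v1) (s2 : seq 'rV['F_3]_v2) :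
  good s1 -> good s2 ->
  good (map (fun x => row_mx x (0 : 'rV_v2)) s1 ++ map (fun y => row_mx (0 : 'rV_v1) y) s2).
Proof.
move=> /and3P[nz1 pw1 /eqP g1] /and3P[nz2 pw2 /eqP g2].
apply/and3P; split.
- rewrite all_cat !all_map; apply/andP; split.
    apply/allP => x xs /=; apply: contra (allP nz1 x xs) => /eqP h.
    by rewrite -row_mx0 in h; case/eq_row_mx: h => ->.
  apply/allP => x xs /=; apply: contra (allP nz2 x xs) => /eqP h.
  by rewrite -row_mx0 in h; case/eq_row_mx: h => _ ->.
- rewrite pairwise_cat !pairwise_map; apply/and3P; split.
  + apply/allrelP => x' y' /mapP [x xs ->] /mapP [y ys ->].
    apply/negP => /sub_rVP [c]; rewrite scale_row_mx scaler0 => /eq_row_mx [h _].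
    by move: (allP nz1 x xs); rewrite h eqxx.
  + apply: sub_pairwise pw1 => x y /=; apply: contra; exact: row_mx_sub_l.
  + apply: sub_pairwise pw2 => x y /=; apply: contra; exact: row_mx_sub_r.
- rewrite gram_cat gram_l gram_r g1 g2 add_block_mx !addr0.
  by rewrite block_mx0.
Qed.

Definition vecn v (l : seq nat) : 'rV['F_3]_v := \row_(j < v) (nth 0%N l j)%:R.

Definition nzb v (l : seq nat) := has (fun j => nth 0%N l j %% 3 != 0)%N (iota 0 v).
Definition npb v (l l' : seq nat) :=
  all (fun c => has (fun j => (nth 0%N l j %% 3) != (c * nth 0%N l' j) %% 3)%N (iota 0 v)) (iota 0 3).
Definition gramb v (L : seq (seq nat)) :=
  all (fun i => all (fun j => sumn (map (fun l => nth 0%N l i * nth 0%N l j) L) %% 3 == 0)%N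
     (iota 0 v)) (iota 0 v).
Definition goodb v L := [&& all (nzb v) L, pairwise (npb v) L & gramb v L].

Lemma F3_eq0 (n : nat) : ((n%:R : 'F_3) == 0) = (n %% 3 == 0)%N.
Proof. by rewrite -val_eqE /= F3_natE. Qed.

Lemma nzb_nz v l : nzb v l -> vecn v l != 0.
Proof.
case/hasP => j; rewrite mem_iota add0n => /andP[_ jv] h.
apply/eqP => e; have := congr1 (fun M : 'rV['F_3]_v => M 0 (Ordinal jv)) e.
by rewrite !mxE /= => /eqP; rewrite F3_eq0 (negbTE h).
Qed.

Lemma npb_np v l l' : npb v l l' -> ~~ (vecn v l <= vecn v l')%MS.
Proof.
move=> h; apply/negP => /sub_rVP [c e].
have c3 : (c < 3)%N := ltn_ord c.
have := allP h c; rewrite mem_iota add0n c3 => /(_ isT) /hasP [j].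
rewrite mem_iota add0n => /andP[_ jv]; apply/negP; rewrite negbK.
have := congr1 (fun M : 'rV['F_3]_v => M 0 (Ordinal jv)) e.
rewrite !mxE /= {1}(F3_nat c) -natrM => /(congr1 (@nat_of_ord _)); rewrite !F3_natE => ->.
done.
Qed.

Lemma gram_entry v (L : seq (seq nat)) (i j : 'I_v) :
  gram (map (vecn v) L) i j = (sumn (map (fun l => nth 0%N l i * nth 0%N l j) L))%:R.
Proof.
elim: L => [|l L IH] /=; first by rewrite /gram big_nil mxE.
rewrite gram_cons mxE IH natrD; congr (_ + _).
by rewrite mxE big_ord1 !mxE natrM.
Qed.

Lemma goodb_good v L : goodb v L -> good (map (vecn v) L).
Proof.
case/and3P => hnz hpw hg; apply/and3P; split.
- by rewrite all_map; apply/allP => l lL /=; apply: nzb_nz; apply: (allP hnz).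
- rewrite pairwise_map; apply: sub_pairwise hpw => l l' /=; exact: npb_np.
- apply/eqP/matrixP => i j; rewrite gram_entry mxE; apply/eqP; rewrite F3_eq0.
  have := allP hg i; rewrite mem_iota add0n ltn_ord => /(_ isT) /allP /(_ j).
  by rewrite mem_iota add0n ltn_ord => /(_ isT).
Qed.

Definition L4 : seq (seq nat) := [:: [:: 1; 0]; [:: 0; 1]; [:: 1; 1]; [:: 1; 2]].
Definition L8 : seq (seq nat) :=
  [:: [:: 1; 0; 0; 0]; [:: 0; 1; 0; 0]; [:: 1; 1; 0; 0]; [:: 1; 2; 0; 0];
      [:: 0; 0; 1; 0]; [:: 0; 0; 0; 1]; [:: 0; 0; 1; 1]; [:: 0; 0; 1; 2]].
Definition L9 : seq (seq nat) :=
  [:: [:: 1; 0; 0]; [:: 1; 0; 1]; [:: 1; 0; 2]; [:: 1; 1; 0]; [:: 1; 1; 1];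
      [:: 1; 1; 2]; [:: 1; 2; 0]; [:: 1; 2; 1]; [:: 1; 2; 2]].
Definition L10 : seq (seq nat) :=
  [:: [:: 0; 1; 0; 1]; [:: 0; 0; 1; 1]; [:: 1; 2; 2; 2]; [:: 0; 1; 2; 1]; [:: 0; 1; 2; 2];
      [:: 1; 2; 2; 1]; [:: 1; 2; 1; 2]; [:: 1; 1; 2; 2]; [:: 1; 1; 1; 2]; [:: 1; 1; 1; 0]].
Definition L11 : seq (seq nat) :=
  [:: [:: 1; 0; 0; 1; 1]; [:: 0; 0; 0; 1; 1]; [:: 1; 1; 1; 2; 2]; [:: 0; 1; 1; 0; 1];
      [:: 1; 1; 1; 1; 0]; [:: 1; 1; 2; 1; 0]; [:: 1; 0; 1; 0; 0]; [:: 1; 2; 1; 1; 0];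
      [:: 1; 1; 2; 0; 0]; [:: 1; 0; 2; 0; 1]; [:: 1; 0; 2; 0; 2]].

Lemma g4 : goodb 2 L4. Proof. by vm_compute. Qed.
Lemma g8 : goodb 4 L8. Proof. by vm_compute. Qed.
Lemma g9 : goodb 3 L9. Proof. by vm_compute. Qed.
Lemma g10 : goodb 4 L10. Proof. by vm_compute. Qed.
Lemma g11 : goodb 5 L11. Proof. by vm_compute. Qed.

Lemma fam k r : (r < 4)%N -> exists v (s : seq 'rV['F_3]_v),
  [/\ (2 <= v)%N, good s & size s = 8 + r + 4 * k]%N.
Proof.
move=> r4; elim: k => [|k [v [s [v2 gs ss]]]].
  case: r r4 => [|[|[|[|]]]] // _.
  - by exists 4%N, (map (vecn 4) L8); split => //; apply: goodb_good; exact: g8.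
  - by exists 3%N, (map (vecn 3) L9); split => //; apply: goodb_good; exact: g9.
  - by exists 4%N, (map (vecn 4) L10); split => //; apply: goodb_good; exact: g10.
  - by exists 5%N, (map (vecn 5) L11); split => //; apply: goodb_good; exact: g11.
exists (v + 2)%N, (map (fun x => row_mx x (0 : 'rV_2)) s ++
                   map (fun y => row_mx (0 : 'rV_v) y) (map (vecn 2) L4)).
split.
- by rewrite leq_addl.
- by apply: good_sum => //; apply: goodb_good; exact: g4.
- by rewrite size_cat !size_map ss /=; lia.
Qed.

Theorem lemma6p7 :
  (forall (v : nat) (C : {set {set vec3 v}}),
      (2 <= v)%N -> point_set C -> C != set0 -> divisible 3 C ->
      #|C| = 4 \/ (8 <= #|C|)%N)
  /\
  (forall n : nat, n = 4 \/ (8 <= n)%N ->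
      exists (v : nat) (C : {set {set vec3 v}}),
        [/\ (2 <= v)%N, point_set C, C != set0, divisible 3 C & #|C| = n]).
Proof.
split.
  by move=> v C v2 pC C0 dC; apply: part1.
move=> n [-> | n8].
  have [C [h1 h2 h3 h4 h5]] := good_set (isT : (2 <= 2)%N) (goodb_good g4) isT.
  by exists 2%N, C; split => //; rewrite h5.
have r4 : ((n - 8) %% 4 < 4)%N by apply: ltn_pmod.
have [v [s [v2 gs ss]]] := fam ((n - 8) %/ 4) r4.
have sn : s != [::] by apply/eqP => e; rewrite e in ss.
have [C [_ pC C0 dC cC]] := good_set v2 gs sn.
exists v, C; split => //; rewrite cC ss.
have := divn_eq (n - 8) 4; lia.
Qed.
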